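(* Let $r,n,m,k$ be positive integers and $t=2^m$. Suppose there exists an $(r,t;n,m)$-DBAC of size $k$ in which every column of every array, viewed as a cyclic binary sequence of length $r$, has least period $r$ and even Hamming weight. Then there exists an $(r,t;n+1,m)$-DBAC of size $2^m k$.
   Context: Arrays are binary and cyclic (doubly periodic); an $n\times m$ window of an $r\times t$ array $A$ at position $(p,q)$ is the matrix with entries $A_{(p+u)\bmod r,(q+v)\bmod t}$, $0\le u<n$, $0\le v<m$. An $(r,t;n,m)$-DBAC (de Bruijn array code) of size $k$ is a set of $k$ binary $r\times t$ cyclic arrays such that every binary $n\times m$ matrix appears exactly once as a window in one of the arrays. *)

(* Defs.v *)
From mathcomp Require Import all_boot all_order all_algebra.
Set Implicit Arguments. Unset Strict Implicit. Unset Printing Implicit Defensive.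

Definition cget (r t : nat) (A : 'M[bool]_(r, t)) (a b : nat) : bool :=
  match @insub nat (fun x => x < r) 'I_r (a %% r),
        @insub nat (fun x => x < t) 'I_t (b %% t) with
  | Some i, Some j => A i j
  | _, _ => false
  end.

Definition window (n m r t : nat) (A : 'M[bool]_(r, t)) (p : 'I_r) (q : 'I_t)
  : 'M[bool]_(n, m) :=
  \matrix_(u < n, v < m) cget A (p + u) (q + v).

(* (r,t;n,m)-DBAC of size k: k distinct arrays (a set of k arrays), such that
   every binary n x m matrix appears exactly once as a window in one of them. *)
Definition is_DBAC (r t n m k : nat) (F : 'I_k -> 'M[bool]_(r, t)) : Prop :=
  injective F /\
  forall M : 'M[bool]_(n, m),
    #|[set x : 'I_k * 'I_r * 'I_t | window n m (F x.1.1) x.1.2 x.2 == M]| = 1.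

Definition col_least_period_r (r t : nat) (A : 'M[bool]_(r, t)) (j : 'I_t) : Prop :=
  forall d, 0 < d < r -> exists i : 'I_r, cget A (i + d) j != A i j.

Definition col_even_weight (r t : nat) (A : 'M[bool]_(r, t)) (j : 'I_t) : Prop :=
  ~~ odd #|[set i : 'I_r | A i j]|.

(* Main.v *)
Require Import Defs.
From mathcomp Require Import all_boot all_order all_algebra.
From mathcomp Require Import zify.
Set Implicit Arguments. Unset Strict Implicit. Unset Printing Implicit Defensive.

Lemma cgetE r t (A : 'M[bool]_(r,t)) a b (i : 'I_r) (j : 'I_t) :
  val i = a %% r -> val j = b %% t -> cget A a b = A i j.
Proof.
move=> Hi Hj; rewrite /cget.
case: insubP => [i' _ Hi'|H]; last by move: H; rewrite /= -Hi ltn_ord.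
case: insubP => [j' _ Hj'|H]; last by move: H; rewrite /= -Hj ltn_ord.
by congr (A _ _); apply: val_inj; rewrite /= ?Hi' ?Hj'.
Qed.

Lemma cget_modl r t (A : 'M[bool]_(r,t)) a b : cget A (a %% r) b = cget A a b.
Proof. by rewrite /cget !modn_mod. Qed.
Lemma cget_modr r t (A : 'M[bool]_(r,t)) a b : cget A a (b %% t) = cget A a b.
Proof. by rewrite /cget !modn_mod. Qed.

Lemma bin_pow2_even m l : 0 < l < m -> ~~ odd 'C(2 ^ m, l).
Proof.
case/andP=> l0 lm; apply/negP => Ho.
have Hm : 2 ^ m %| l.
  have Hc : coprime (2 ^ m) 'C(2 ^ m, l) by apply: coprimeXl; rewrite coprime2n.
  rewrite -(Gauss_dvdl _ Hc).
  case: l l0 lm Ho Hc => // l _ lm Ho Hc.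
  by rewrite -mul_bin_diag dvdn_mulr.
have := dvdn_leq l0 Hm.
have := ltn_expl m (isT : 1 < 2).
lia.
Qed.

Definition gm (m : nat) (c : nat -> bool) (x : nat) : bool :=
  odd (\sum_(l < m) c l * 'C(x %% 2 ^ m, l)).
Definition shiftc (c : nat -> bool) l := c l.+1.

Lemma pascal_sum m c y : c m.+1 = false ->
  odd (\sum_(l < m.+1) c l * 'C(y.+1, l)) =
  odd (\sum_(l < m.+1) c l * 'C(y, l)) (+) odd (\sum_(l < m.+1) c l.+1 * 'C(y, l)).
Proof.
move=> Hc.
have E1 : \sum_(l < m.+1) c l * 'C(y.+1, l) =
   c 0 + \sum_(l < m) c l.+1 * 'C(y, l.+1) + \sum_(l < m) c l.+1 * 'C(y, l).
  rewrite big_ord_recl /= bin0 muln1 -addnA -big_split /=; congr (_ + _).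
  by apply: eq_bigr => i _; rewrite binS mulnDr.
have E2 : \sum_(l < m.+1) c l * 'C(y, l) = c 0 + \sum_(l < m) c l.+1 * 'C(y, l.+1).
  by rewrite big_ord_recl /= bin0 muln1.

have E3 : \sum_(l < m.+1) c l.+1 * 'C(y, l) = \sum_(l < m) c l.+1 * 'C(y, l).
  by rewrite big_ord_recr /= Hc mul0n addn0.
by rewrite E1 E2 E3 !oddD.
Qed.

Lemma even_sum (I : finType) (F : I -> nat) : (forall i, ~~ odd (F i)) -> ~~ odd (\sum_i F i).
Proof.
move=> H; apply: (big_ind (fun x => ~~ odd x)) => //= x y Hx Hy.
by rewrite oddD (negbTE Hx) (negbTE Hy).
Qed.

Lemma gm_step m c x : 0 < m -> c m = false ->
  gm m c x.+1 = gm m c x (+) gm m (shiftc c) x.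
Proof.
case: m => // m _ Hc; rewrite /gm /shiftc.
set t := 2 ^ m.+1.
have Ht : 0 < t by rewrite expn_gt0.
have E : x.+1 %% t = (x %% t).+1 %% t by rewrite -[x.+1]addn1 -modnDml addn1.
have Hy := ltn_pmod x Ht.
rewrite E; case: (ltnP (x %% t).+1 t) => Hlt.
  by rewrite (modn_small Hlt) pascal_sum.
have Ey : (x %% t).+1 = t by apply/eqP; rewrite eqn_leq Hlt Hy.
rewrite Ey modnn -pascal_sum // Ey.
rewrite !big_ord_recl /= !bin0 !muln1 !oddD; congr (_ (+) _).
rewrite (negbTE (even_sum _)); last by move=> i; rewrite bin0n muln0.
rewrite (negbTE (even_sum _)) //.
move=> i; rewrite oddM negb_and; apply/orP; right; rewrite /t.
apply: bin_pow2_even; rewrite /bump /=; have := ltn_ord i; lia.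
Qed.
Definition coef m (w : {ffun 'I_m -> bool}) (l : nat) : bool := odflt false (omap w (insub l)).

Lemma coef_out m (w : {ffun 'I_m -> bool}) l : m <= l -> coef w l = false.
Proof. by move=> H; rewrite /coef insubN // -leqNgt. Qed.

Lemma coef_in m (w : {ffun 'I_m -> bool}) (i : 'I_m) : coef w i = w i.
Proof. by rewrite /coef valK. Qed.

Lemma gm_rec m c x : gm m.+1 c x =
  c 0 (+) odd (\sum_(l < m) c l.+1 * 'C(x %% 2 ^ m.+1, l.+1)).
Proof. by rewrite /gm big_ord_recl /= bin0 muln1 oddD oddb. Qed.

Definition supp d (c : nat -> bool) := forall l, d <= l -> c l = false.

Lemma gm_inj m d q : forall c1 c2, d <= m -> supp d c1 -> supp d c2 ->
  (forall v, v < d -> gm m c1 (q + v) = gm m c2 (q + v)) ->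
  forall l, l < d -> c1 l = c2 l.
Proof.
elim: d => [//|d IH] c1 c2 Hdm S1 S2 Hw.
have Hm : 0 < m by apply: leq_ltn_trans Hdm.
have Hsh : forall l, l < d -> c1 l.+1 = c2 l.+1.
  apply: (IH (shiftc c1) (shiftc c2)).
  - exact: ltnW.
  - by move=> l Hl; apply: S1.
  - by move=> l Hl; apply: S2.
  move=> v Hv.
  have E1 := gm_step (q + v) Hm (S1 m Hdm).
  have E2 := gm_step (q + v) Hm (S2 m Hdm).
  have H1 : gm m (shiftc c1) (q + v) = gm m c1 (q + v) (+) gm m c1 (q + v).+1.
    by rewrite E1 addKb.
  have H2 : gm m (shiftc c2) (q + v) = gm m c2 (q + v) (+) gm m c2 (q + v).+1.
    by rewrite E2 addKb.
  rewrite H1 H2 -!addnS !Hw //; exact: ltnW.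
have Hall : forall l, c1 l.+1 = c2 l.+1.
  move=> l; case: (ltnP l d) => Hl; first exact: Hsh.
  by rewrite S1 // S2.
case=> [_|l Hl]; last exact: Hsh.
move: (Hw 0 isT); clear IH Hsh Hw; case: m Hdm Hm => // m _ _.
rewrite !gm_rec.
under eq_bigr do rewrite Hall.
by move/addIb.
Qed.

Definition win m (q : nat) (w : {ffun 'I_m -> bool}) : {ffun 'I_m -> bool} :=
  [ffun v : 'I_m => gm m (coef w) (q + v)].

Lemma win_inj m q : injective (@win m q).
Proof.
move=> w1 w2 H; apply/ffunP => i.
rewrite -!coef_in; apply: (@gm_inj m m q) => //.
- by move=> l; apply: coef_out.
- by move=> l; apply: coef_out.
move=> v Hv; have := congr1 (fun f : {ffun _ -> _} => f (Ordinal Hv)) H; rewrite !ffunE.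
by [].
Qed.

Lemma win_onto m q (y : {ffun 'I_m -> bool}) : exists w, win q w = y.
Proof.
have := @inj_card_onto _ _ (@win m q) (@win_inj m q) (leqnn _) y.
by case/codomP => w ->; exists w.
Qed.
Definition pre r t (A : 'M[bool]_(r, t)) (p j : nat) : bool :=
  odd (\sum_(u < p) cget A u j).

Definition Bmx r m (A : 'M[bool]_(r, 2 ^ m)) (w : {ffun 'I_m -> bool}) : 'M[bool]_(r, 2 ^ m) :=
  \matrix_(p < r, j < 2 ^ m) (gm m (coef w) j (+) pre A p j).

Lemma cget_B r m (A : 'M[bool]_(r, 2 ^ m)) w a b : 0 < r ->
  cget (Bmx A w) a b = gm m (coef w) b (+) pre A (a %% r) b.
Proof.
move=> Hr; have Ht : 0 < 2 ^ m by rewrite expn_gt0.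
rewrite (@cgetE _ _ _ a b (Ordinal (ltn_pmod a Hr)) (Ordinal (ltn_pmod b Ht))) //.
rewrite mxE /= /gm modn_mod; congr (_ (+) _).
by rewrite /pre; congr (odd _); apply: eq_bigr => u _; rewrite cget_modr.
Qed.

Lemma pre_r r t (A : 'M[bool]_(r, t)) j : 0 < r -> 0 < t ->
  (forall j : 'I_t, col_even_weight A j) -> pre A r j = false.
Proof.
move=> Hr Ht Hev; set J := Ordinal (ltn_pmod j Ht).
have := Hev J; rewrite /col_even_weight /pre.
have -> : \sum_(u < r) cget A u j = \sum_(u < r | A u J) 1.
  rewrite [RHS]big_mkcond /=; apply: eq_bigr => u _.
  rewrite (@cgetE _ _ _ u j u J) //; last by rewrite modn_small.
by rewrite (sum1dep_card (fun u : 'I_r => A u J)) => /negbTE.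
Qed.

Lemma step_B r m (A : 'M[bool]_(r, 2 ^ m)) w a b : 0 < r ->
  (forall j : 'I_(2 ^ m), col_even_weight A j) ->
  cget (Bmx A w) a.+1 b = cget (Bmx A w) a b (+) cget A a b.
Proof.
move=> Hr Hev; rewrite !cget_B //.
have E : a.+1 %% r = (a %% r).+1 %% r by rewrite -[a.+1]addn1 -modnDml addn1.
have Hy := ltn_pmod a Hr.
rewrite E -addbA; congr (_ (+) _).
have Epre : pre A (a %% r).+1 b = pre A (a %% r) b (+) cget A a b.
  by rewrite /pre big_ord_recr /= oddD oddb cget_modl.
case: (ltnP (a %% r).+1 r) => Hlt; first by rewrite (modn_small Hlt) Epre.
have Ey : (a %% r).+1 = r by apply/eqP; rewrite eqn_leq Hlt Hy.
rewrite -Epre Ey modnn pre_r // ?expn_gt0 //.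
by rewrite /pre big_ord0.
Qed.
Lemma ltw n (u : 'I_n) : val u < n + 1.
Proof. by rewrite addn1 ltnW // ltnS ltn_ord. Qed.
Lemma ltS n (u : 'I_n) : (val u).+1 < n + 1.
Proof. by rewrite addn1 ltnS ltn_ord. Qed.
Lemma lt0 n : 0 < n + 1.
Proof. by rewrite addn1. Qed.
Definition ordw n (u : 'I_n) : 'I_(n + 1) := Ordinal (ltw u).
Definition ordS1 n (u : 'I_n) : 'I_(n + 1) := Ordinal (ltS u).
Definition ord0' n : 'I_(n + 1) := Ordinal (lt0 n).

Definition Dmx n m (M : 'M[bool]_(n + 1, m)) : 'M[bool]_(n, m) :=
  \matrix_(u < n, v < m) (M (ordw u) v (+) M (ordS1 u) v).

Lemma win_equiv r m n (A : 'M[bool]_(r, 2 ^ m)) w (p : 'I_r) (q : 'I_(2 ^ m))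
  (M : 'M[bool]_(n + 1, m)) : 0 < r ->
  (forall j : 'I_(2 ^ m), col_even_weight A j) ->
  (window (n + 1) m (Bmx A w) p q = M <->
   window n m A p q = Dmx M /\
   forall v : 'I_m, cget (Bmx A w) p (q + v) = M (ord0' n) v).
Proof.
move=> Hr Hev; split.
  move=> Hw.
  have E : forall (u : 'I_(n + 1)) (v : 'I_m), cget (Bmx A w) (p + u) (q + v) = M u v.
    by move=> u v; rewrite -Hw mxE.
  split.
    apply/matrixP => u v; rewrite !mxE -!E /= addnS step_B //.
    by rewrite addKb.
  by move=> v; rewrite -(E (ord0' n) v) /= addn0.
case=> HA Htop.
have claim : forall u (Hu : u < n + 1) (v : 'I_m),
    cget (Bmx A w) (p + u) (q + v) = M (Ordinal Hu) v.
  elim=> [|u IH] Hu v.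
    rewrite addn0 Htop; congr (M _ _); exact: val_inj.
  have Hun : u < n by move: Hu; rewrite addn1 ltnS.
  rewrite addnS step_B // (IH (ltnW Hu)).
  have := congr1 (fun X : 'M[bool]_(n, m) => X (Ordinal Hun) v) HA.
  rewrite !mxE /= => ->.
  have -> : M (Ordinal (ltnW Hu)) v = M (ordw (Ordinal Hun)) v.
    by congr (M _ _); exact: val_inj.
  rewrite addKb; congr (M _ _); exact: val_inj.
apply/matrixP => u v; rewrite mxE claim; congr (M _ _); exact: val_inj.

Qed.
Lemma card1_uniq (X : finType) (P : pred X) :
  #|[set x | P x]| = 1 -> exists x0, P x0 /\ forall y, P y -> y = x0.
Proof.
move/eqP/cards1P => [x0 Hs]; exists x0; split.
  have : x0 \in [set x | P x] by rewrite Hs set11.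
  by rewrite inE.
by move=> y Py; apply/set1P; rewrite -Hs inE.
Qed.

Lemma pack r t n m (T : finType) N (H : T -> 'M[bool]_(r, t)) :
  0 < r -> 0 < t -> #|T| = N ->
  (forall M : 'M[bool]_(n, m), exists x0 : T * 'I_r * 'I_t,
     window n m (H x0.1.1) x0.1.2 x0.2 = M /\
     forall y : T * 'I_r * 'I_t, window n m (H y.1.1) y.1.2 y.2 = M -> y = x0) ->
  exists G : 'I_N -> 'M[bool]_(r, t), is_DBAC n m G.
Proof.
move=> Hr Ht <- HU.
pose G := fun i : 'I_#|T| => H (enum_val i).
have U : forall M : 'M[bool]_(n, m), exists x1 : 'I_#|T| * 'I_r * 'I_t,
    forall x : 'I_#|T| * 'I_r * 'I_t, (window n m (G x.1.1) x.1.2 x.2 == M) = (x == x1).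
  move=> M; have [[[y p] q] [Hw Hy]] := HU M.
  exists (enum_rank y, p, q) => [[[i p'] q']] /=.
  apply/eqP/eqP => [Hw'|[-> -> ->]]; last by rewrite /G enum_rankK.
  by case: (Hy (enum_val i, p', q') Hw') => <- -> ->; rewrite enum_valK.
exists G; split.
  move=> a b Hab.
  have [x1 Hx1] := U (window n m (G a) (Ordinal Hr) (Ordinal Ht)).
  have := Hx1 (a, Ordinal Hr, Ordinal Ht); rewrite /= eqxx => /esym/eqP Ha.
  have := Hx1 (b, Ordinal Hr, Ordinal Ht); rewrite /= Hab eqxx => /esym/eqP.
  by rewrite -Ha; case.
move=> M; have [x1 Hx1] := U M.
have -> : [set x : 'I_#|T| * 'I_r * 'I_t | window n m (G x.1.1) x.1.2 x.2 == M] = [set x1].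
  by apply/setP => x; rewrite !inE Hx1.
exact: cards1.
Qed.

Theorem theorem10 (r n m k : nat) :
  0 < r -> 0 < n -> 0 < m -> 0 < k ->
  (exists F : 'I_k -> 'M[bool]_(r, 2 ^ m),
      is_DBAC n m F /\
      forall (i : 'I_k) (j : 'I_(2 ^ m)),
        col_least_period_r (F i) j /\ col_even_weight (F i) j) ->
  exists G : 'I_(2 ^ m * k) -> 'M[bool]_(r, 2 ^ m), is_DBAC (n + 1) m G.
Proof.
move=> Hr Hn Hm Hk [F [[_ HF] Hcol]].
have Hev : forall i j, col_even_weight (F i) j := fun i j => (Hcol i j).2.
have Ht : 0 < 2 ^ m by rewrite expn_gt0.
pose T := ({ffun 'I_m -> bool} * 'I_k)%type.
apply: (@pack r (2 ^ m) (n + 1) m T (2 ^ m * k) (fun x => Bmx (F x.2) x.1) Hr Ht).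
  by rewrite card_prod card_ffun card_bool !card_ord.
move=> M.
have [[[i0 p0] q0] [H0 U0]] := card1_uniq (HF (Dmx M)).
set tgt := [ffun v : 'I_m => M (ord0' n) v (+) pre (F i0) p0 (q0 + v)].
have [w Hw] := win_onto q0 tgt.
exists ((w, i0), p0, q0); split.
  apply/win_equiv => //; split; first exact/eqP.
  move=> v; rewrite cget_B // modn_small //.
  have := congr1 (fun f : {ffun _ -> _} => f v) Hw; rewrite !ffunE => ->.
  by rewrite addbK.
move=> [[[w' i] p] q] /= /win_equiv [] // HA Htop.
have := U0 (i, p, q); rewrite /= HA eqxx => /(_ isT) [Ei Ep Eq].
subst i p q.
congr (_, _, _); congr (_, _).
apply: (@win_inj m q0); rewrite Hw; apply/ffunP => v; rewrite !ffunE.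
by rewrite -(Htop v) cget_B // modn_small // addbK.
Qed.
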